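(* For every $n \geq 1$, every $c \in \{1,\ldots,n\}$ and every $p=(p_1,\ldots,p_n) \in (0,1)^n$ with $p_1 + \cdots + p_n \leq 1$, $$\mathbb{E}(T_{c,n}(p)) \geq \mathbb{E}(T_{c,n}(v)) \geq \mathbb{E}(T_{c,n}(u)),$$ where $p_0 = 1 - (p_1 + \cdots + p_n)$, $v = (v_1,\ldots,v_n)$ with $v_i = (1-p_0)/n$, and $u = (1/n,\ldots,1/n)$.
   Context: For a vector $q=(q_1,\ldots,q_n)$ of nonnegative reals with $q_1+\cdots+q_n\le 1$, let $q_0 = 1-(q_1+\cdots+q_n)$; coupons are drawn independently, one at each time $1,2,\ldots$, from $\{0,1,\ldots,n\}$, coupon $i$ with probability $q_i$, and coupon $0$ never belongs to the collection. $T_{c,n}(q)$ is the number of draws needed until $c$ distinct coupons among $\{1,\ldots,n\}$ have first been drawn. *)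

(* Defs.v *)
From Stdlib Require Import Reals List Arith Bool.
Import ListNotations.
Open Scope R_scope.

Fixpoint sumR (f : nat -> R) (n : nat) : R :=
  match n with
  | O => 0
  | S m => sumR f m + f (S m)
  end.

(* A probability vector q = (q_1,...,q_n) is a function nat -> R (only the
   values at 1..n matter).  Coupon 0 has probability q_0 = 1 - (q_1+...+q_n). *)
Definition draw_prob (n : nat) (q : nat -> R) (k : nat) : R :=
  if Nat.eqb k 0 then 1 - sumR q n else q k.

Fixpoint words (n t : nat) : list (list nat) :=
  match t with
  | O => [nil]
  | S t' => flat_map (fun w => map (fun k => w ++ [k]) (seq 0 (S n))) (words n t')
  end.

Definition word_prob (n : nat) (q : nat -> R) (w : list nat) : R :=
  fold_right (fun k acc => draw_prob n q k * acc) 1 w.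

Definition ndistinct (n : nat) (w : list nat) : nat :=
  length (filter (fun k => existsb (Nat.eqb k) w) (seq 1 n)).

(* P(T_{c,n}(q) = t): after t draws at least c distinct coupons of {1..n},
   but after t-1 draws fewer than c. *)
Definition prob_T_eq (c n : nat) (q : nat -> R) (t : nat) : R :=
  fold_right Rplus 0
    (map (fun w => if andb (Nat.leb c (ndistinct n w))
                           (Nat.ltb (ndistinct n (removelast w)) c)
                   then word_prob n q w else 0)
         (words n t)).

Definition expected_T_is (c n : nat) (q : nat -> R) (l : R) : Prop :=
  infinite_sum (fun t => INR t * prob_T_eq c n q t) l.

(* Main.v *)
Require Import Defs.
From Stdlib Require Import Reals List Arith Bool Lia Lra Psatz.
From Stdlib Require Import FunctionalExtensionality Classical.
Import ListNotations.
Open Scope R_scope.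

Definition gsum {T} (g : T -> R) (l : list T) : R :=
  fold_right (fun x acc => g x + acc) 0 l.

Lemma gsum_map_fr {T} (g : T -> R) l : fold_right Rplus 0 (map g l) = gsum g l.
Proof. induction l; simpl; auto. rewrite IHl; auto. Qed.

Lemma gsum_app {T} (g : T -> R) l1 l2 : gsum g (l1 ++ l2) = gsum g l1 + gsum g l2.
Proof. induction l1; simpl; [lra|]. rewrite IHl1; lra. Qed.

Lemma gsum_map {T U} (g : U -> R) (m : T -> U) l : gsum g (map m l) = gsum (fun x => g (m x)) l.
Proof. induction l; simpl; auto. rewrite IHl; auto. Qed.

Lemma gsum_flat_map {T U} (g : U -> R) (h : T -> list U) l :
  gsum g (flat_map h l) = gsum (fun x => gsum g (h x)) l.
Proof. induction l; simpl; auto. rewrite gsum_app, IHl; auto. Qed.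

Lemma gsum_ext_in {T} (f g : T -> R) l : (forall x, In x l -> f x = g x) -> gsum f l = gsum g l.
Proof. induction l; simpl; intros H; auto. rewrite H, IHl; auto. Qed.

Lemma gsum_plus {T} (f g : T -> R) l : gsum (fun x => f x + g x) l = gsum f l + gsum g l.
Proof. induction l; simpl; [lra|]. rewrite IHl; lra. Qed.

Lemma gsum_scal {T} (c : R) (f : T -> R) l : gsum (fun x => c * f x) l = c * gsum f l.
Proof. induction l; simpl; [lra|]. rewrite IHl; lra. Qed.

Lemma gsum_le {T} (f g : T -> R) l : (forall x, In x l -> f x <= g x) -> gsum f l <= gsum g l.
Proof. induction l; simpl; intros H; [lra|]. specialize (IHl (fun x Hx => H x (or_intror Hx))).
  specialize (H a (or_introl eq_refl)). lra. Qed.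

Lemma gsum_nonneg {T} (f : T -> R) l : (forall x, In x l -> 0 <= f x) -> 0 <= gsum f l.
Proof. intros H. replace 0 with (gsum (fun _ : T => 0) l). apply gsum_le; auto.
  clear H; induction l; simpl; auto; lra. Qed.

Lemma gsum_comm {T U} (f : T -> U -> R) l1 l2 :
  gsum (fun x => gsum (fun y => f x y) l2) l1 = gsum (fun y => gsum (fun x => f x y) l1) l2.
Proof. induction l1; simpl.
  - induction l2; simpl; auto; lra.
  - rewrite IHl1, <- gsum_plus. auto. Qed.

Lemma gsum_const {T} (c : R) (l : list T) : gsum (fun _ => c) l = INR (length l) * c.
Proof. induction l; simpl length; simpl gsum; [simpl; lra|]. rewrite IHl, S_INR; lra. Qed.

Lemma gsum_remove (g : nat -> R) l i : NoDup l -> In i l ->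
  gsum g l = g i + gsum g (filter (fun x => negb (Nat.eqb x i)) l).
Proof.
  induction l as [|a l IH]; simpl; intros Hnd Hin; [contradiction|].
  inversion Hnd; subst. destruct Hin as [<-|Hin].
  - rewrite Nat.eqb_refl; simpl. f_equal.
    assert (filter (fun x => negb (x =? a)%nat) l = l) as ->; auto.
    clear -H1. induction l; simpl; auto. destruct (Nat.eqb_spec a0 a); subst.
    + exfalso; apply H1; simpl; auto.
    + simpl. rewrite IHl; auto. intro; apply H1; simpl; auto.
  - destruct (Nat.eqb_spec a i); subst; [contradiction|]. simpl.
    rewrite (IH H2 Hin). lra.
Qed.

Lemma filter_filter_nat (f g : nat -> bool) l :
  filter f (filter g l) = filter (fun x => g x && f x) l.
Proof. induction l; simpl; auto. destruct (g a); simpl; auto. destruct (f a); simpl; rewrite IHl; auto. Qed.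

Definition others (n i j : nat) := filter (fun x => negb (Nat.eqb x i) && negb (Nat.eqb x j)) (seq 0 (S n)).

Lemma gsum_split2 (g : nat -> R) n i j : (i <= n)%nat -> (j <= n)%nat -> i <> j ->
  gsum g (seq 0 (S n)) = gsum g (others n i j) + g i + g j.
Proof.
  intros Hi Hj Hij.
  rewrite (gsum_remove g _ i); [| apply seq_NoDup | apply in_seq; lia].
  rewrite (gsum_remove g _ j).
  - unfold others. rewrite filter_filter_nat. lra.
  - apply NoDup_filter, seq_NoDup.
  - apply filter_In. split; [apply in_seq; lia|]. apply negb_true_iff, Nat.eqb_neq; auto.
Qed.

Lemma in_others n i j l : In l (others n i j) <-> (l <= n)%nat /\ l <> i /\ l <> j.
Proof. unfold others. rewrite filter_In, in_seq, andb_true_iff, !negb_true_iff, !Nat.eqb_neq. lia. Qed.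

Lemma gsum_seq1_sumR f n : gsum f (seq 1 n) = sumR f n.
Proof. induction n; [simpl; auto|]. rewrite seq_S, gsum_app, IHn. simpl. replace (1 + n)%nat with (S n) by lia. lra. Qed.

Definition add (A : nat -> bool) (k : nat) : nat -> bool :=
  fun x => A x || (negb (Nat.eqb x 0) && Nat.eqb x k).

Lemma add_comm A x y : add (add A x) y = add (add A y) x.
Proof. apply functional_extensionality; intro z; unfold add.
  destruct (A z), (Nat.eqb z 0), (Nat.eqb z x), (Nat.eqb z y); reflexivity. Qed.
Lemma add_idem A x : add (add A x) x = add A x.
Proof. apply functional_extensionality; intro z; unfold add.
  destruct (A z), (Nat.eqb z 0), (Nat.eqb z x); reflexivity. Qed.
Lemma add_zero A : add A 0 = A.
Proof. apply functional_extensionality; intro z; unfold add.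
  destruct (Nat.eqb_spec z 0); subst; simpl; rewrite ?orb_false_r; auto. Qed.
Lemma add_at A k x : add A k x = (A x || (negb (Nat.eqb x 0) && Nat.eqb x k))%bool.
Proof. reflexivity. Qed.

Fixpoint V (n : nat) (w : nat -> R) (t : nat) (F : (nat -> bool) -> R) (A : nat -> bool) : R :=
  match t with
  | O => F A
  | S t' => V n w t' (fun B => gsum (fun k => w k * F (add B k)) (seq 0 (S n))) A
  end.

Lemma V_first n w t F A :
  V n w (S t) F A = gsum (fun k => w k * V n w t F (add A k)) (seq 0 (S n)).
Proof.
  revert F A; induction t; intros F A; [reflexivity|].
  change (V n w (S (S t)) F A) with
    (V n w (S t) (fun B => gsum (fun k => w k * F (add B k)) (seq 0 (S n))) A).
  rewrite IHt. reflexivity.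
Qed.

Lemma V_wext n w w' t F A : (forall k, (k <= n)%nat -> w k = w' k) ->
  V n w t F A = V n w' t F A.
Proof.
  intros H; revert F A; induction t; intros F A; [reflexivity|].
  rewrite !V_first. apply gsum_ext_in. intros k Hk.
  apply in_seq in Hk. rewrite H by lia. rewrite IHt. reflexivity.
Qed.

Lemma V_mono n w t F G A : (forall k, (k <= n)%nat -> 0 <= w k) ->
  (forall B, F B <= G B) -> V n w t F A <= V n w t G A.
Proof.
  intros Hw H; revert A; induction t; intros A; [apply H|].
  rewrite !V_first. apply gsum_le. intros k Hk. apply in_seq in Hk.
  apply Rmult_le_compat_l; [apply Hw; lia| apply IHt].
Qed.

Definition union (A : nat -> bool) (u : list nat) : nat -> bool :=
  fun x => A x || (negb (Nat.eqb x 0) && existsb (Nat.eqb x) u).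

Lemma union_nil A : union A [] = A.
Proof. apply functional_extensionality; intro; unfold union; simpl.
  rewrite andb_false_r, orb_false_r; auto. Qed.

Lemma union_snoc A u k : union A (u ++ [k]) = add (union A u) k.
Proof. apply functional_extensionality; intro x; unfold union, add.
  rewrite existsb_app; simpl. rewrite orb_false_r.
  destruct (A x), (Nat.eqb x 0), (existsb (Nat.eqb x) u), (Nat.eqb x k); reflexivity. Qed.

Lemma word_prob_snoc n q u k : word_prob n q (u ++ [k]) = word_prob n q u * draw_prob n q k.
Proof. unfold word_prob. induction u; simpl; [lra|]. rewrite IHu. lra. Qed.

Lemma words_sum n q t F A :
  gsum (fun u => word_prob n q u * F (union A u)) (words n t) = V n (draw_prob n q) t F A.
Proof.
  revert F; induction t; intros F.
  - simpl. rewrite union_nil. unfold word_prob; simpl. lra.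
  - change (words n (S t)) with (flat_map (fun w => map (fun k => w ++ [k]) (seq 0 (S n))) (words n t)).
    rewrite gsum_flat_map.
    change (V n (draw_prob n q) (S t) F A) with
      (V n (draw_prob n q) t (fun B => gsum (fun k => draw_prob n q k * F (add B k)) (seq 0 (S n))) A).
    rewrite <- IHt. apply gsum_ext_in; intros u _.
    rewrite gsum_map, <- gsum_scal. apply gsum_ext_in; intros k _.
    rewrite word_prob_snoc, union_snoc. lra.
Qed.

Definition good (f : R -> R) : Prop :=
  (forall z, 0 <= z -> 0 <= f z) /\
  (forall x y, 0 <= x -> x <= y -> f x <= f y) /\
  (forall a b a' b', 0 <= b -> b <= b' -> b' <= a' -> a' <= a -> a + b = a' + b' ->
     f a' + f b' <= f a + f b).

Lemma good_const c : 0 <= c -> good (fun _ => c).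
Proof. intros; repeat split; intros; lra. Qed.

Lemma good_plus f g : good f -> good g -> good (fun z => f z + g z).
Proof. intros [f1 [f2 f3]] [g1 [g2 g3]]; repeat split; intros.
  - specialize (f1 z H); specialize (g1 z H); lra.
  - specialize (f2 x y H H0); specialize (g2 x y H H0); lra.
  - specialize (f3 a b a' b' H H0 H1 H2 H3); specialize (g3 a b a' b' H H0 H1 H2 H3); lra.
Qed.

Lemma good_scal c f : 0 <= c -> good f -> good (fun z => c * f z).
Proof. intros Hc [f1 [f2 f3]]; repeat split; intros.
  - specialize (f1 z H); nra.
  - specialize (f2 x y H H0); nra.
  - specialize (f3 a b a' b' H H0 H1 H2 H3); nra.
Qed.

Lemma good_id_mul f : good f -> good (fun z => z * f z).
Proof. intros [f1 [f2 f3]]; repeat split; intros.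
  - specialize (f1 z H); nra.
  - specialize (f2 x y H H0); specialize (f1 x H); nra.
  - specialize (f3 a b a' b' H H0 H1 H2 H3).
    assert (Ha : f a' <= f a) by (apply f2; lra).
    assert (Hb : f b <= f b') by (apply f2; lra).
    assert (Hab : f b <= f a) by (apply f2; lra).
    assert (E1 : a' * (f a - f a') >= b' * (f a - f a')) by nra.
    assert (E2 : b' * (f a - f a') >= b' * (f b' - f b)) by nra.
    assert (E3 : (a - a') * (f a - f b) >= 0) by nra.
    replace a with (a' + (a - a')) at 1 by ring.
    replace b with (b' - (a - a')) at 1 by lra.
    nra.
Qed.

Lemma good_gsum (w : nat -> R) (g : nat -> R -> R) l :
  (forall k, In k l -> 0 <= w k /\ good (g k)) -> good (fun z => gsum (fun k => w k * g k z) l).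
Proof. induction l; intros H; simpl.
  - apply good_const; lra.
  - apply good_plus.
    + destruct (H a (or_introl eq_refl)). apply good_scal; auto.
    + apply IHl. intros; apply H; simpl; auto.
Qed.

Definition upd (w : nat -> R) i a j b : nat -> R :=
  fun k => if Nat.eqb k i then a else if Nat.eqb k j then b else w k.

Lemma V_split n w i a j b t F A : (i <= n)%nat -> (j <= n)%nat -> i <> j ->
  V n (upd w i a j b) (S t) F A =
  gsum (fun k => w k * V n (upd w i a j b) t F (add A k)) (others n i j)
  + a * V n (upd w i a j b) t F (add A i) + b * V n (upd w i a j b) t F (add A j).
Proof.
  intros Hi Hj Hij. rewrite V_first, (gsum_split2 _ n i j) by auto.
  assert (upd w i a j b i = a) as -> by (unfold upd; rewrite Nat.eqb_refl; auto).
  assert (upd w i a j b j = b) as -> by (unfold upd; destruct (Nat.eqb_spec j i); [congruence|]; rewrite Nat.eqb_refl; auto).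
  f_equal. f_equal. apply gsum_ext_in. intros k Hk.
  apply in_others in Hk. unfold upd. destruct (Nat.eqb_spec k i); [lia|].
  destruct (Nat.eqb_spec k j); [lia|]. reflexivity.
Qed.

Section Merge.
Variables (n : nat) (w : nat -> R) (i j : nat) (s : R) (F : (nat -> bool) -> R).
Hypothesis Hi : (i <= n)%nat.
Hypothesis Hj : (j <= n)%nat.
Hypothesis Hij : i <> j.
Hypothesis Hw : forall k, (k <= n)%nat -> k <> i -> k <> j -> 0 <= w k.
Hypothesis HF1 : forall B l, F (add B l) <= F B.
Hypothesis HF2 : forall A, A i = false -> A j = false -> F (add A j) = F (add A i).

Lemma add_disj A l x : A x = false -> l <> x -> add A l x = false.
Proof. intros H Hl. rewrite add_at, H. destruct (Nat.eqb_spec x l); [lia|]. rewrite andb_false_r; auto. Qed.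

Lemma merge_inv t : exists (K M : (nat -> bool) -> R) (phi psi : (nat -> bool) -> R -> R),
  forall A, A i = false -> A j = false ->
    good (phi A) /\ good (psi A) /\
    forall a b, 0 <= a -> 0 <= b -> a + b = s ->
      V n (upd w i a j b) t F A = K A + phi A a + phi A b /\
      V n (upd w i a j b) t F (add A i) = M A + psi A a /\
      V n (upd w i a j b) t F (add A j) = M A + psi A b /\
      V n (upd w i a j b) t F (add (add A i) j) = M A.
Proof.
  induction t.
  - exists F, (fun A => F (add (add A i) j)), (fun _ _ => 0),
      (fun A _ => F (add A i) - F (add (add A i) j)).
    intros A HAi HAj. split; [apply good_const; lra|]. split.
    { apply good_const. specialize (HF1 (add A i) j). lra. }
    intros a b Ha Hb Hab. simpl. rewrite (HF2 A HAi HAj). repeat split; lra.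
  - destruct IHt as (K & M & phi & psi & IH).
    set (O := others n i j).
    exists (fun A => gsum (fun l => w l * K (add A l)) O + s * M A),
      (fun A => gsum (fun l => w l * M (add A l)) O + s * M A),
      (fun A z => gsum (fun l => w l * phi (add A l) z) O + z * psi A z),
      (fun A z => gsum (fun l => w l * psi (add A l) z) O + z * psi A z).
    intros A HAi HAj.
    assert (HO : forall l, In l O -> (add A l) i = false /\ (add A l) j = false /\ 0 <= w l).
    { intros l Hl. apply in_others in Hl. repeat split; try (apply add_disj; auto; lia).
      apply Hw; lia. }
    destruct (IH A HAi HAj) as (Gphi & Gpsi & IHA).
    split; [|split].
    + apply good_plus; [|apply good_id_mul; auto].
      apply good_gsum. intros l Hl. destruct (HO l Hl) as (H1 & H2 & H3).
      split; auto. apply (IH _ H1 H2).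
    + apply good_plus; [|apply good_id_mul; auto].
      apply good_gsum. intros l Hl. destruct (HO l Hl) as (H1 & H2 & H3).
      split; auto. apply (IH _ H1 H2).
    + intros a b Ha Hb Hab.
      destruct (IHA a b Ha Hb Hab) as (E0 & E1 & E2 & E3).
      assert (Hs : forall l, In l O -> let W := upd w i a j b in
        V n W t F (add A l) = K (add A l) + phi (add A l) a + phi (add A l) b /\
        V n W t F (add (add A l) i) = M (add A l) + psi (add A l) a /\
        V n W t F (add (add A l) j) = M (add A l) + psi (add A l) b /\
        V n W t F (add (add (add A l) i) j) = M (add A l)).
      { intros l Hl. destruct (HO l Hl) as (H1 & H2 & H3).
        destruct (IH _ H1 H2) as (_ & _ & Hx). apply Hx; auto. }
      repeat split.
      * rewrite V_split by auto. fold O.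
        rewrite (gsum_ext_in _ (fun l => w l * K (add A l) + (w l * phi (add A l) a + w l * phi (add A l) b))).
        2:{ intros l Hl. destruct (Hs l Hl) as (-> & _). ring. }
        rewrite gsum_plus, gsum_plus, E1, E2. rewrite <- Hab. ring.
      * rewrite V_split by auto. fold O.
        rewrite (gsum_ext_in _ (fun l => w l * M (add A l) + w l * psi (add A l) a)).
        2:{ intros l Hl. rewrite add_comm. destruct (Hs l Hl) as (_ & -> & _). ring. }
        rewrite gsum_plus, add_idem, E1, E3. rewrite <- Hab. ring.
      * rewrite V_split by auto. fold O.
        rewrite (gsum_ext_in _ (fun l => w l * M (add A l) + w l * psi (add A l) b)).
        2:{ intros l Hl. rewrite add_comm. destruct (Hs l Hl) as (_ & _ & -> & _). ring. }
        rewrite gsum_plus, add_idem, (add_comm A j i), E2, E3. rewrite <- Hab. ring.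
      * rewrite V_split by auto. fold O.
        rewrite (gsum_ext_in _ (fun l => w l * M (add A l))).
        2:{ intros l Hl. rewrite (add_comm _ j l), (add_comm A i l).
            destruct (Hs l Hl) as (_ & _ & _ & ->). ring. }
        rewrite (add_comm (add A i) j i), !add_idem, E3.
        rewrite <- Hab. ring.
Qed.

End Merge.

Lemma merge_le n w i j F a b a' b' :
  (i <= n)%nat -> (j <= n)%nat -> i <> j ->
  (forall k, (k <= n)%nat -> k <> i -> k <> j -> 0 <= w k) ->
  (forall B l, F (add B l) <= F B) ->
  (forall A, A i = false -> A j = false -> F (add A j) = F (add A i)) ->
  0 <= b -> b <= b' -> b' <= a' -> a' <= a -> a + b = a' + b' -> forall t,
  V n (upd w i a' j b') t F (fun _ => false) <= V n (upd w i a j b) t F (fun _ => false).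
Proof.
  intros Hi Hj Hij Hw HF1 HF2 H0 H1 H2 H3 H4 t.
  destruct (merge_inv n w i j (a + b) F Hi Hj Hij Hw HF1 HF2 t) as (K & M & phi & psi & H).
  destruct (H (fun _ => false) eq_refl eq_refl) as ((_ & _ & Gp) & _ & E).
  destruct (E a b) as (-> & _); try lra.
  destruct (E a' b') as (-> & _); try lra.
  specialize (Gp a b a' b' H0 H1 H2 H3 H4). lra.
Qed.

Lemma add_disj' A l x : A x = false -> l <> x -> add A l x = false.
Proof. intros H Hl. rewrite add_at, H. destruct (Nat.eqb_spec x l); [lia|]. rewrite andb_false_r; auto. Qed.

Section Shift.
Variables (n : nat) (w : nat -> R) (k : nat) (s : R) (F : (nat -> bool) -> R).
Hypothesis Hk : (1 <= k <= n)%nat.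
Hypothesis Hw : forall l, (l <= n)%nat -> l <> 0%nat -> l <> k -> 0 <= w l.
Hypothesis HF1 : forall B l, F (add B l) <= F B.

Lemma shift_inv t : exists (M : (nat -> bool) -> R) (psi : (nat -> bool) -> R -> R),
  forall A, A k = false ->
    good (psi A) /\
    forall x y, 0 <= x -> x + y = s ->
      V n (upd w 0 x k y) t F A = M A + psi A x /\
      V n (upd w 0 x k y) t F (add A k) = M A.
Proof.
  induction t.
  - exists (fun A => F (add A k)), (fun A _ => F A - F (add A k)).
    intros A HA. split; [apply good_const; specialize (HF1 A k); lra|].
    intros x y Hx Hxy; simpl; split; lra.
  - destruct IHt as (M & psi & IH).
    set (O := others n 0 k).
    exists (fun A => gsum (fun l => w l * M (add A l)) O + s * M A),
      (fun A z => gsum (fun l => w l * psi (add A l) z) O + z * psi A z).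
    intros A HA.
    assert (HO : forall l, In l O -> (add A l) k = false /\ 0 <= w l).
    { intros l Hl. apply in_others in Hl. split; [apply add_disj'; auto; lia|]. apply Hw; lia. }
    destruct (IH A HA) as (Gpsi & IHA).
    split.
    + apply good_plus; [|apply good_id_mul; auto].
      apply good_gsum. intros l Hl. destruct (HO l Hl) as (H1 & H3).
      split; auto. apply (IH _ H1).
    + intros x y Hx Hxy.
      destruct (IHA x y Hx Hxy) as (E0 & E1).
      assert (Hs : forall l, In l O ->
        V n (upd w 0 x k y) t F (add A l) = M (add A l) + psi (add A l) x /\
        V n (upd w 0 x k y) t F (add (add A l) k) = M (add A l)).
      { intros l Hl. destruct (HO l Hl) as (H1 & H3).
        destruct (IH _ H1) as (_ & Hx'). apply Hx'; auto. }
      split.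
      * rewrite V_split by lia. fold O. rewrite add_zero.
        rewrite (gsum_ext_in _ (fun l => w l * M (add A l) + w l * psi (add A l) x)).
        2:{ intros l Hl. destruct (Hs l Hl) as (-> & _). ring. }
        rewrite gsum_plus, E0, E1. rewrite <- Hxy. ring.
      * rewrite V_split by lia. fold O. rewrite add_zero, add_idem.
        rewrite (gsum_ext_in _ (fun l => w l * M (add A l))).
        2:{ intros l Hl. rewrite add_comm. destruct (Hs l Hl) as (_ & ->). ring. }
        rewrite E1. rewrite <- Hxy. ring.
Qed.
End Shift.

Lemma shift_le n w k F x y x' y' :
  (1 <= k <= n)%nat ->
  (forall l, (l <= n)%nat -> l <> 0%nat -> l <> k -> 0 <= w l) ->
  (forall B l, F (add B l) <= F B) ->
  0 <= x' -> x' <= x -> x + y = x' + y' -> forall t,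
  V n (upd w 0 x' k y') t F (fun _ => false) <= V n (upd w 0 x k y) t F (fun _ => false).
Proof.
  intros Hk Hw HF H0 H1 H2 t.
  destruct (shift_inv n w k (x + y) F Hk Hw HF t) as (M & psi & H).
  destruct (H (fun _ => false) eq_refl) as ((_ & Gm & _) & E).
  destruct (E x y) as (-> & _); try lra.
  destruct (E x' y') as (-> & _); try lra.
  specialize (Gm x' x H0 H1). lra.
Qed.

Definition card (n : nat) (A : nat -> bool) : nat := length (filter A (seq 1 n)).
Definition Fc (n c : nat) (A : nat -> bool) : R := if Nat.ltb (card n A) c then 1 else 0.

Lemma filter_len_mono {T} (P P' : T -> bool) l :
  (forall x, In x l -> P x = true -> P' x = true) -> (length (filter P l) <= length (filter P' l))%nat.
Proof. induction l; simpl; intros H; auto.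
  destruct (P a) eqn:E1.
  - rewrite (H a (or_introl eq_refl) E1). simpl. apply le_n_S, IHl; auto.
  - destruct (P' a); simpl; [apply le_S|]; apply IHl; auto.
Qed.

Lemma filter_len_lt {T} (P P' : T -> bool) l :
  (forall x, In x l -> P' x = true -> P x = true) ->
  (exists x, In x l /\ P x = true /\ P' x = false) ->
  (length (filter P' l) < length (filter P l))%nat.
Proof. induction l; simpl; intros H [x [Hx [H1 H2]]]; [contradiction|].
  destruct Hx as [<-|Hx].
  - rewrite H1, H2. simpl. apply le_n_S, filter_len_mono. auto.
  - destruct (P' a) eqn:E1.
    + rewrite (H a (or_introl eq_refl) E1). simpl. apply le_n_S, IHl; eauto.
    + destruct (P a); simpl; [apply le_S|]; apply IHl; eauto.
Qed.

Lemma card_add_le n A l : (card n A <= card n (add A l))%nat.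
Proof. apply filter_len_mono. intros x _ H. rewrite add_at, H; auto. Qed.

Lemma Fc_anti n c B l : Fc n c (add B l) <= Fc n c B.
Proof. unfold Fc. pose proof (card_add_le n B l).
  destruct (Nat.ltb_spec (card n (add B l)) c), (Nat.ltb_spec (card n B) c); lra || lia. Qed.

Lemma len_filter_add A k l : NoDup l -> In k l -> A k = false -> k <> 0%nat ->
  length (filter (add A k) l) = S (length (filter A l)).
Proof.
  induction l; simpl; intros Hnd Hin HA Hk; [contradiction|]. inversion Hnd; subst.
  destruct Hin as [<-|Hin].
  - rewrite HA, add_at, HA, Nat.eqb_refl. destruct (Nat.eqb_spec a 0); [lia|]. simpl.
    f_equal. apply f_equal. clear -H1. induction l; simpl; auto.
    rewrite add_at. destruct (Nat.eqb_spec a0 a); [subst; exfalso; apply H1; simpl; auto|].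
    rewrite andb_false_r, orb_false_r. destruct (A a0); simpl; rewrite IHl; auto;
    intro; apply H1; simpl; auto.
  - rewrite add_at. destruct (Nat.eqb_spec a k); [subst; contradiction|].
    rewrite andb_false_r, orb_false_r. destruct (A a); simpl; rewrite IHl; auto.
Qed.

Lemma card_add_new n A k : (1 <= k <= n)%nat -> A k = false -> card n (add A k) = S (card n A).
Proof. intros Hk HA. apply len_filter_add; auto. apply seq_NoDup. apply in_seq; lia. lia. Qed.

Lemma Fc_sym n c i j A : (1 <= i <= n)%nat -> (1 <= j <= n)%nat -> A i = false -> A j = false ->
  Fc n c (add A j) = Fc n c (add A i).
Proof. intros. unfold Fc. rewrite !card_add_new; auto. Qed.

Lemma Fc_bounds n c A : 0 <= Fc n c A <= 1.
Proof. unfold Fc. destruct (Nat.ltb _ _); lra. Qed.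

Definition cnt (n : nat) (mu : R) (w : nat -> R) : nat :=
  length (filter (fun k => if Req_EM_T (w k) mu then false else true) (seq 1 n)).

Lemma gsum_lt_c (f : nat -> R) c l x0 : (forall x, In x l -> f x <= c) -> In x0 l -> f x0 < c ->
  gsum f l < INR (length l) * c.
Proof.
  induction l; intros H Hin Hlt; [contradiction|].
  change (length (a :: l)) with (S (length l)). rewrite S_INR. change (gsum f (a :: l)) with (f a + gsum f l).
  simpl in Hin, H. destruct Hin as [<-|Hin].
  - assert (gsum f l <= gsum (fun _ => c) l) by (apply gsum_le; auto).
    rewrite gsum_const in H0. lra.
  - specialize (IHl (fun x Hx => H x (or_intror Hx)) Hin Hlt). specialize (H a (or_introl eq_refl)). lra.
Qed.

Lemma gsum_opp {T} (f : T -> R) l : gsum (fun x => - f x) l = - gsum f l.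
Proof. induction l; simpl; [lra|]. rewrite IHl; lra. Qed.

Lemma exists_big (f : nat -> R) c l x0 : gsum f l = INR (length l) * c -> In x0 l -> f x0 <> c ->
  exists i, In i l /\ f i > c.
Proof.
  intros Hs Hin Hne. apply NNPP; intro Hno.
  assert (Hle : forall x, In x l -> f x <= c).
  { intros x Hx. apply Rnot_lt_le. intro Hc. apply Hno. exists x; split; auto. }
  assert (f x0 < c) by (specialize (Hle x0 Hin); lra).
  pose proof (gsum_lt_c f c l x0 Hle Hin H). lra.
Qed.

Lemma exists_small (f : nat -> R) c l x0 : gsum f l = INR (length l) * c -> In x0 l -> f x0 <> c ->
  exists j, In j l /\ f j < c.
Proof.
  intros Hs Hin Hne. destruct (exists_big (fun x => - f x) (- c) l x0) as [j [Hj Hl]]; auto.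
  - rewrite gsum_opp, Hs. ring.
  - intro; apply Hne; lra.
  - exists j; split; auto; lra.
Qed.

Section RH.
Variables (n c : nat) (W0 mu : R).
Hypothesis HW0 : 0 <= W0.

Definition wmu : nat -> R := fun k => if Nat.eqb k 0 then W0 else mu.

Lemma RH N : forall w, w 0%nat = W0 -> (forall k, (1 <= k <= n)%nat -> 0 <= w k) ->
  gsum w (seq 1 n) = INR n * mu -> (cnt n mu w <= N)%nat ->
  forall t, V n wmu t (Fc n c) (fun _ => false) <= V n w t (Fc n c) (fun _ => false).
Proof.
  induction N; intros w Hw0 Hpos Hsum Hcnt t.
  - destruct (classic (exists k, (1 <= k <= n)%nat /\ w k <> mu)) as [[k [Hk Hne]]|Hno].
    + exfalso. assert (0 < cnt n mu w)%nat; [|lia].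
      unfold cnt. assert (Hz : length (filter (fun _ : nat => false) (seq 1 n)) = 0%nat).
      { clear. induction (seq 1 n); simpl; auto. }
      rewrite <- Hz at 1.
      apply (filter_len_lt _ (fun _ => false)); [intros; discriminate|].
      exists k. split; [apply in_seq; lia|]. destruct (Req_EM_T (w k) mu); [contradiction|auto].
    + right. apply V_wext. intros k Hk. unfold wmu. destruct (Nat.eqb_spec k 0); [subst; auto|].
      apply NNPP; intro H; apply Hno; exists k; split; [lia|auto].
  - destruct (classic (exists k, (1 <= k <= n)%nat /\ w k <> mu)) as [[k [Hk Hne]]|Hno].
    2:{ right. apply V_wext. intros k Hk. unfold wmu. destruct (Nat.eqb_spec k 0); [subst; auto|].
      apply NNPP; intro H; apply Hno; exists k; split; [lia|auto]. }
    assert (Hlen : gsum w (seq 1 n) = INR (length (seq 1 n)) * mu) by (rewrite length_seq; auto).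
    assert (Hkin : In k (seq 1 n)) by (apply in_seq; lia).
    destruct (exists_big w mu _ k Hlen Hkin Hne) as [i [Hi Hwi]].
    destruct (exists_small w mu _ k Hlen Hkin Hne) as [j [Hj Hwj]].
    apply in_seq in Hi. apply in_seq in Hj.
    assert (Hij : i <> j) by (intro; subst; lra).
    set (d := Rmin (w i - mu) (mu - w j)).
    assert (Hd1 : d <= w i - mu) by apply Rmin_l.
    assert (Hd2 : d <= mu - w j) by apply Rmin_r.
    assert (Hd3 : d = w i - mu \/ d = mu - w j) by (unfold d, Rmin; destruct (Rle_dec _ _); auto).
    assert (Hd0 : 0 < d) by (destruct Hd3; lra).
    set (w' := upd w i (w i - d) j (w j + d)).
    assert (Hw'o : forall x, x <> i -> x <> j -> w' x = w x).
    { intros x H1 H2. unfold w', upd. destruct (Nat.eqb_spec x i); [lia|]. destruct (Nat.eqb_spec x j); [lia|auto]. }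
    assert (Hw'i : w' i = w i - d) by (unfold w', upd; rewrite Nat.eqb_refl; auto).
    assert (Hw'j : w' j = w j + d) by (unfold w', upd; destruct (Nat.eqb_spec j i); [lia|]; rewrite Nat.eqb_refl; auto).
    apply Rle_trans with (V n w' t (Fc n c) (fun _ => false)).
    + apply IHN.
      * rewrite Hw'o by lia. auto.
      * intros x Hx. destruct (Nat.eq_dec x i); [subst; rewrite Hw'i; specialize (Hpos j ltac:(lia)); lra|].
        destruct (Nat.eq_dec x j); [subst; rewrite Hw'j; specialize (Hpos j ltac:(lia)); lra|].
        rewrite Hw'o by auto. auto.
      * rewrite <- Hsum.
        assert (gsum w' (seq 0 (S n)) = gsum w (seq 0 (S n))).
        { rewrite !(gsum_split2 _ n i j) by lia. rewrite Hw'i, Hw'j.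
          rewrite (gsum_ext_in w' w); [lra|]. intros x Hx. apply in_others in Hx. apply Hw'o; lia. }
        simpl in H. rewrite Hw'o in H by lia. lra.
      * assert (cnt n mu w' < cnt n mu w)%nat; [|lia].
        apply filter_len_lt.
        -- intros x Hx. apply in_seq in Hx.
           destruct (Nat.eq_dec x i); [subst; destruct (Req_EM_T (w i) mu); auto; lra|].
           destruct (Nat.eq_dec x j); [subst; destruct (Req_EM_T (w j) mu); auto; lra|].
           rewrite Hw'o by auto. auto.
        -- destruct Hd3 as [Hd|Hd].
           ++ exists i. split; [apply in_seq; lia|]. rewrite Hw'i.
              destruct (Req_EM_T (w i) mu); [lra|]. destruct (Req_EM_T (w i - d) mu); [auto|lra].
           ++ exists j. split; [apply in_seq; lia|]. rewrite Hw'j.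
              destruct (Req_EM_T (w j) mu); [lra|]. destruct (Req_EM_T (w j + d) mu); [auto|lra].
    + rewrite (V_wext n w (upd w i (w i) j (w j))).
      2:{ intros x _. unfold upd. destruct (Nat.eqb_spec x i); [subst; auto|].
          destruct (Nat.eqb_spec x j); [subst; auto|auto]. }
      apply merge_le; try lia.
      * intros x Hx H1 H2. destruct (Nat.eqb_spec x 0); [subst; lra|]. apply Hpos; lia.
      * apply Fc_anti.
      * intros A HA1 HA2. apply Fc_sym; auto; lia.
      * specialize (Hpos j ltac:(lia)); lra.
      * lra.
      * lra.
      * lra.
      * ring.
Qed.
End RH.

Definition Q n c q t := V n (draw_prob n q) t (Fc n c) (fun _ => false).

Lemma sum_draw n q : gsum (draw_prob n q) (seq 0 (S n)) = 1.
Proof.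
  change (seq 0 (S n)) with (0%nat :: seq 1 n).
  change (gsum (draw_prob n q) (0%nat :: seq 1 n)) with (draw_prob n q 0 + gsum (draw_prob n q) (seq 1 n)).
  rewrite (gsum_ext_in _ q), gsum_seq1_sumR.
  - unfold draw_prob; simpl. ring.
  - intros x Hx. apply in_seq in Hx. unfold draw_prob. destruct (Nat.eqb_spec x 0); [lia|auto].
Qed.

Lemma card_union n u : card n (union (fun _ => false) u) = ndistinct n u.
Proof.
  unfold card, ndistinct. f_equal. apply filter_ext_in. intros x Hx. apply in_seq in Hx.
  unfold union. destruct (Nat.eqb_spec x 0); [lia|]. reflexivity.
Qed.

Lemma V_nonneg n w t F A : (forall k, (k <= n)%nat -> 0 <= w k) -> (forall B, 0 <= F B) -> 0 <= V n w t F A.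
Proof.
  intros Hw HF; revert A; induction t; intros A; [apply HF|].
  rewrite V_first. apply gsum_nonneg. intros k Hk. apply in_seq in Hk.
  apply Rmult_le_pos; [apply Hw; lia|apply IHt].
Qed.

Lemma probT_0 c n q : (1 <= c)%nat -> prob_T_eq c n q 0 = 0.
Proof.
  intros Hc. unfold prob_T_eq. simpl.
  unfold ndistinct; simpl.
  assert (Hz : length (filter (fun _ : nat => false) (seq 1 n)) = 0%nat).
  { clear. induction (seq 1 n); simpl; auto. }
  rewrite Hz. destruct c; [lia|]. simpl. lra.
Qed.

Lemma probT_S c n q t : prob_T_eq c n q (S t) = Q n c q t - Q n c q (S t).
Proof.
  unfold prob_T_eq, Q. rewrite gsum_map_fr.
  change (words n (S t)) with (flat_map (fun w => map (fun k => w ++ [k]) (seq 0 (S n))) (words n t)).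
  rewrite gsum_flat_map.
  change (V n (draw_prob n q) (S t) (Fc n c) (fun _ => false)) with
    (V n (draw_prob n q) t (fun B => gsum (fun k => draw_prob n q k * Fc n c (add B k)) (seq 0 (S n))) (fun _ => false)).
  rewrite <- !words_sum. unfold Rminus. rewrite <- gsum_opp, <- gsum_plus.
  apply gsum_ext_in. intros u _. cbv beta. rewrite gsum_map.
  set (U := union (fun _ => false) u).
  replace (word_prob n q u * Fc n c U) with (gsum (fun k => word_prob n q u * Fc n c U * draw_prob n q k) (seq 0 (S n)))
    by (rewrite gsum_scal, sum_draw; ring).
  rewrite <- gsum_scal, <- gsum_opp, <- gsum_plus.
  apply gsum_ext_in. intros k _.
  rewrite removelast_last, word_prob_snoc, <- !card_union, union_snoc. fold U.
  pose proof (card_add_le n U k). unfold Fc.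
  destruct (Nat.leb_spec c (card n (add U k))), (Nat.ltb_spec (card n U) c),
    (Nat.ltb_spec (card n (add U k)) c); simpl; try lia; lra.
Qed.

Lemma partial_sum c n q N : (1 <= c)%nat ->
  sum_f_R0 (fun t => INR t * prob_T_eq c n q t) N = sum_f_R0 (Q n c q) N - INR (S N) * Q n c q N.
Proof.
  intros Hc. induction N.
  - simpl. rewrite probT_0 by auto. lra.
  - change (sum_f_R0 (fun t => INR t * prob_T_eq c n q t) (S N)) with (sum_f_R0 (fun t => INR t * prob_T_eq c n q t) N + INR (S N) * prob_T_eq c n q (S N)).
    change (sum_f_R0 (Q n c q) (S N)) with (sum_f_R0 (Q n c q) N + Q n c q (S N)).
    rewrite IHN, probT_S, !S_INR. ring.
Qed.

Lemma bern h N : 0 <= h -> (1 + h) ^ N >= 1 + INR N * h + INR N * (INR N - 1) / 2 * (h * h).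
Proof.
  intros Hh. induction N.
  - simpl. lra.
  - rewrite S_INR. simpl pow.
    assert (HN : INR N * (INR N - 1) >= 0).
    { destruct N; [simpl; lra|]. rewrite S_INR. pose proof (pos_INR N). nra. }
    assert (h * h * h * (INR N * (INR N - 1)) >= 0) by (apply Rle_ge, Rmult_le_pos; [|lra]; repeat apply Rmult_le_pos; lra).
    pose proof (pos_INR N). nra.
Qed.

Lemma lin_geom r : 0 <= r < 1 -> Un_cv (fun N => INR (S N) * r ^ N) 0.
Proof.
  intros Hr eps Heps. set (h := 1 - r).
  assert (Hh : 0 < h <= 1) by (unfold h; lra).
  destruct (INR_archimed (eps * (h * h)) 4) as [N0 HN0].
  { apply Rmult_gt_0_compat; [lra|]. nra. }
  exists (S N0). intros N HN. unfold Rdist. rewrite Rminus_0_r.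
  assert (HY : 0 <= r ^ N) by (apply pow_le; lra).
  assert (HXY : r ^ N * (1 + h) ^ N <= 1).
  { rewrite <- Rpow_mult_distr. apply Rle_trans with (1 ^ N); [apply pow_incr; unfold h; split; nra|rewrite pow1; lra]. }
  pose proof (bern h N ltac:(lra)).
  assert (HNge : INR N >= INR (S N0)) by (apply Rle_ge, le_INR; lia).
  rewrite S_INR in HNge. pose proof (pos_INR N0).
  assert (HX : (1 + h) ^ N >= INR N * INR N * (h * h) / 2).
  { assert (INR N * h * (1 - h / 2) >= 0) by (apply Rle_ge; repeat apply Rmult_le_pos; lra). nra. }
  assert (HNY : INR N * INR N * (h * h) * r ^ N <= 2) by nra.
  rewrite Rabs_pos_eq by (apply Rmult_le_pos; [apply pos_INR|auto]).
  rewrite S_INR.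
  assert (H2 : (INR N + 1) * r ^ N <= 2 * INR N * r ^ N) by nra.
  assert (H3 : 2 * INR N * r ^ N * (INR N * (h * h)) <= 4) by nra.
  assert (H4 : INR N * (eps * (h * h)) > 4) by nra.
  assert (H5 : INR N * (h * h) > 0) by nra.
  nra.
Qed.

Definition Gm n (A : nat -> bool) := gsum (fun i => if A i then 0 else 1) (seq 1 n).

Lemma Gm_card_l (A : nat -> bool) l :
  gsum (fun i => if A i then 0 else 1) l + INR (length (filter A l)) = INR (length l).
Proof.
  induction l; [simpl; lra|].
  change (gsum (fun i => if A i then 0 else 1) (a :: l)) with ((if A a then 0 else 1) + gsum (fun i => if A i then 0 else 1) l).
  change (length (a :: l)) with (S (length l)). rewrite S_INR.
  simpl filter. destruct (A a); [change (length (a :: filter A l)) with (S (length (filter A l))); rewrite S_INR|]; lra.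
Qed.

Lemma Fc_le_Gm n c A : (c <= n)%nat -> Fc n c A <= Gm n A.
Proof.
  intros Hc. pose proof (Gm_card_l A (seq 1 n)). rewrite length_seq in H.
  fold (Gm n A) in H. unfold Fc. fold (card n A) in H.
  destruct (Nat.ltb_spec (card n A) c).
  - assert (INR (S (card n A)) <= INR n) by (apply le_INR; lia). rewrite S_INR in H1. lra.
  - unfold Gm. apply gsum_nonneg. intros; destruct (A x); lra.
Qed.

Lemma V_Gm n w t A : gsum w (seq 0 (S n)) = 1 ->
  V n w t (Gm n) A = gsum (fun i => if A i then 0 else (1 - w i) ^ t) (seq 1 n).
Proof.
  intros Hw. revert A; induction t; intros A.
  - simpl. reflexivity.
  - rewrite V_first.
    rewrite (gsum_ext_in _ (fun k => gsum (fun i => w k * (if add A k i then 0 else (1 - w i) ^ t)) (seq 1 n))).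
    2:{ intros k _. rewrite IHt, gsum_scal. reflexivity. }
    rewrite gsum_comm. apply gsum_ext_in. intros i Hi. apply in_seq in Hi.
    destruct (A i) eqn:HA.
    + rewrite (gsum_ext_in _ (fun _ => 0)).
      2:{ intros k _. rewrite add_at, HA. simpl. ring. }
      rewrite gsum_const. ring.
    + assert (Hin : In i (seq 0 (S n))) by (apply in_seq; lia).
      rewrite (gsum_remove _ _ i (seq_NoDup _ _) Hin).
      rewrite (gsum_remove w _ i (seq_NoDup _ _) Hin) in Hw.
      set (L := filter (fun x => negb (x =? i)%nat) (seq 0 (S n))) in *.
      rewrite add_at, HA, Nat.eqb_refl. destruct (Nat.eqb_spec i 0); [lia|]. simpl.
      rewrite (gsum_ext_in _ (fun k => (1 - w i) ^ t * w k)).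
      2:{ intros k Hk. apply filter_In in Hk. destruct Hk as [_ Hk].
          rewrite add_at, HA. destruct (Nat.eqb_spec i k); [subst; rewrite Nat.eqb_refl in Hk; discriminate|].
          destruct (Nat.eqb_spec i 0); simpl; ring. }
      rewrite gsum_scal. replace (gsum w L) with (1 - w i) by lra.
      ring.
Qed.

Lemma exists_r (p : nat -> R) l : (forall i, In i l -> 0 < p i < 1) ->
  exists r, 0 <= r < 1 /\ forall i, In i l -> 1 - p i <= r.
Proof.
  induction l; intros H.
  - exists 0. split; [lra|]. intros i [].
  - destruct IHl as [r [Hr Hb]]; [intros; apply H; simpl; auto|].
    exists (Rmax r (1 - p a)). specialize (H a (or_introl eq_refl)). split.
    + unfold Rmax; destruct (Rle_dec _ _); lra.
    + intros i [<-|Hi]; [apply Rmax_r|]. apply Rle_trans with r; [auto|apply Rmax_l].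
Qed.

Lemma Q_geom n c p : (c <= n)%nat -> (forall i, (1 <= i <= n)%nat -> 0 < p i < 1) -> sumR p n <= 1 ->
  exists r, 0 <= r < 1 /\ forall t, Q n c p t <= INR n * r ^ t.
Proof.
  intros Hc Hp Hs. destruct (exists_r p (seq 1 n)) as [r [Hr Hb]].
  { intros i Hi; apply Hp; apply in_seq in Hi; lia. }
  exists r. split; auto. intros t. unfold Q.
  assert (Hw : forall k, (k <= n)%nat -> 0 <= draw_prob n p k).
  { intros k Hk. unfold draw_prob. destruct (Nat.eqb_spec k 0); [lra|]. specialize (Hp k ltac:(lia)); lra. }
  apply Rle_trans with (V n (draw_prob n p) t (Gm n) (fun _ => false)).
  { apply V_mono; auto. intros; apply Fc_le_Gm; auto. }
  rewrite V_Gm by apply sum_draw.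
  rewrite <- (length_seq n 1) at 2. rewrite <- gsum_const.
  apply gsum_le. intros i Hi. apply pow_incr. specialize (Hb i Hi). apply in_seq in Hi.
  unfold draw_prob. destruct (Nat.eqb_spec i 0); [lia|]. specialize (Hp i ltac:(lia)). lra.
Qed.

Lemma sumR_const a n : sumR (fun _ => a) n = INR n * a.
Proof. induction n; simpl sumR; [simpl; ring|]. rewrite IHn, S_INR. ring. Qed.

Definition zz n P0 m : nat -> R := fun k =>
  if Nat.eqb k 0 then P0 * (INR n - INR m) / INR n
  else if Nat.leb k m then 1 / INR n else (1 - P0) / INR n.

Lemma chain n c P0 t : (1 <= n)%nat -> 0 <= P0 <= 1 -> forall m, (m <= n)%nat ->
  V n (zz n P0 m) t (Fc n c) (fun _ => false) <= V n (zz n P0 0) t (Fc n c) (fun _ => false).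
Proof.
  intros Hn HP. assert (HN : INR n >= 1) by (apply Rle_ge; replace 1 with (INR 1) by reflexivity; apply le_INR; lia).
  induction m; intros Hm; [lra|].
  apply Rle_trans with (V n (zz n P0 m) t (Fc n c) (fun _ => false)); [|apply IHm; lia].
  set (x := P0 * (INR n - INR m) / INR n). set (y := (1 - P0) / INR n).
  set (x' := P0 * (INR n - INR (S m)) / INR n). set (y' := 1 / INR n).
  rewrite (V_wext n (zz n P0 m) (upd (zz n P0 m) 0 x (S m) y)).
  2:{ intros k _. unfold upd, zz. destruct (Nat.eqb_spec k 0); [subst; reflexivity|].
      destruct (Nat.eqb_spec k (S m)); [subst|reflexivity].
      destruct (Nat.leb_spec (S m) m); [lia|reflexivity]. }
  rewrite (V_wext n (zz n P0 (S m)) (upd (zz n P0 m) 0 x' (S m) y')).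
  2:{ intros k _. unfold upd, zz. destruct (Nat.eqb_spec k 0); [subst; reflexivity|].
      destruct (Nat.eqb_spec k (S m)); [subst; rewrite Nat.leb_refl; reflexivity|].
      destruct (Nat.leb_spec k m), (Nat.leb_spec k (S m)); try lia; reflexivity. }
  assert (HmI : INR (S m) <= INR n) by (apply le_INR; lia).
  rewrite S_INR in HmI. unfold x'. rewrite S_INR.
  apply shift_le.
  - lia.
  - intros l Hl H0 H1. unfold zz. destruct (Nat.eqb_spec l 0); [lia|].
    destruct (Nat.leb l m); apply Rmult_le_pos; try lra; left; apply Rinv_0_lt_compat; lra.
  - apply Fc_anti.
  - apply Rmult_le_pos; [apply Rmult_le_pos; lra|left; apply Rinv_0_lt_compat; lra].
  - unfold x. unfold Rdiv. apply Rmult_le_compat_r; [left; apply Rinv_0_lt_compat; lra|]. nra.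
  - unfold x, y, y'. field. lra.
Qed.

Lemma series_ok (x : nat -> R) K r : 0 <= r < 1 -> 0 <= K -> (forall t, 0 <= x t <= K * r ^ t) ->
  (exists L, Un_cv (sum_f_R0 x) L) /\ Un_cv (fun N => INR (S N) * x N) 0.
Proof.
  intros Hr HK Hx. split.
  - destruct (growing_cv (sum_f_R0 x)) as [L HL].
    + intros N. simpl. specialize (Hx (S N)). lra.
    + exists (K / (1 - r)). intros y [N ->].
      apply Rle_trans with (sum_f_R0 (fun i => r ^ i * K) N).
      { apply sum_Rle. intros i _. specialize (Hx i). lra. }
      rewrite <- scal_sum, tech3 by lra.
      assert (0 <= r ^ S N) by (apply pow_le; lra).
      unfold Rdiv. assert (0 < / (1 - r)) by (apply Rinv_0_lt_compat; lra).
      assert (K * (r ^ S N * / (1 - r)) >= 0) by (apply Rle_ge, Rmult_le_pos; [lra|apply Rmult_le_pos; lra]).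
      nra.
    + exists L; auto.
  - intros eps Heps.
    destruct (lin_geom r Hr (eps / (K + 1))) as [N HN].
    { apply Rdiv_lt_0_compat; lra. }
    exists N. intros m Hm. specialize (HN m Hm). unfold Rdist in *. rewrite Rminus_0_r in *.
    specialize (Hx m). pose proof (pos_INR (S m)).
    rewrite Rabs_pos_eq in * by (apply Rmult_le_pos; lra || (apply pow_le; lra)).
    apply Rle_lt_trans with (K * (INR (S m) * r ^ m)).
    + nra.
    + apply Rle_lt_trans with (K * (eps / (K + 1))).
      * apply Rmult_le_compat_l; lra.
      * unfold Rdiv. rewrite <- Rmult_assoc. apply Rmult_lt_reg_r with (K + 1); [lra|].
        rewrite Rmult_assoc, Rinv_l by lra. nra.
Qed.

Lemma expected_ok c n q L : (1 <= c)%nat -> Un_cv (sum_f_R0 (Q n c q)) L ->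
  Un_cv (fun N => INR (S N) * Q n c q N) 0 -> expected_T_is c n q L.
Proof.
  intros Hc H1 H2. unfold expected_T_is, infinite_sum.
  change (Un_cv (fun N => sum_f_R0 (fun t => INR t * prob_T_eq c n q t) N) L).
  replace (fun N => sum_f_R0 (fun t => INR t * prob_T_eq c n q t) N) with
    (fun N => sum_f_R0 (Q n c q) N - INR (S N) * Q n c q N).
  2:{ apply functional_extensionality; intro N. rewrite partial_sum; auto. }
  replace L with (L - 0) by ring. apply CV_minus; auto.
Qed.

Theorem theorem2 (n c : nat) (p : nat -> R) :
  (1 <= n)%nat ->
  (1 <= c <= n)%nat ->
  (forall i : nat, (1 <= i <= n)%nat -> 0 < p i < 1) ->
  sumR p n <= 1 ->
  let p0 := 1 - sumR p n in
  let v := fun _ : nat => (1 - p0) / INR n in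
  let u := fun _ : nat => 1 / INR n in
  exists Ep Ev Eu : R,
    expected_T_is c n p Ep /\ expected_T_is c n v Ev /\ expected_T_is c n u Eu /\
    Ep >= Ev /\ Ev >= Eu.
Proof.
  intros Hn Hc Hp Hs p0 v u.
  assert (HN : INR n >= 1) by (apply Rle_ge; replace 1 with (INR 1) by reflexivity; apply le_INR; lia).
  assert (HS0 : 0 <= sumR p n).
  { rewrite <- gsum_seq1_sumR. apply gsum_nonneg. intros x Hx. apply in_seq in Hx.
    specialize (Hp x ltac:(lia)); lra. }
  assert (Hp0 : 0 <= p0 <= 1) by (unfold p0; lra).
  set (mu := (1 - p0) / INR n).
  assert (Cvp : forall t, Q n c v t <= Q n c p t).
  { intros t. unfold Q.
    rewrite (V_wext n (draw_prob n v) (wmu p0 mu)).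
    2:{ intros k _. unfold draw_prob, wmu. destruct (Nat.eqb_spec k 0); [|reflexivity].
        unfold v. rewrite sumR_const. unfold mu. field. lra. }
    apply (RH n c p0 mu (proj1 Hp0) (cnt n mu (draw_prob n p))).
    - reflexivity.
    - intros k Hk. unfold draw_prob. destruct (Nat.eqb_spec k 0); [lia|]. specialize (Hp k Hk). lra.
    - rewrite (gsum_ext_in _ p), gsum_seq1_sumR.
      + unfold mu, p0. field. lra.
      + intros x Hx. apply in_seq in Hx. unfold draw_prob. destruct (Nat.eqb_spec x 0); [lia|auto].
    - lia. }
  assert (Cuv : forall t, Q n c u t <= Q n c v t).
  { intros t. unfold Q.
    rewrite (V_wext n (draw_prob n u) (zz n p0 n)).
    2:{ intros k Hk. unfold draw_prob, zz. destruct (Nat.eqb_spec k 0).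
        - unfold u. rewrite sumR_const. field. lra.
        - destruct (Nat.leb_spec k n); [reflexivity|lia]. }
    rewrite (V_wext n (draw_prob n v) (zz n p0 0)).
    2:{ intros k Hk. unfold draw_prob, zz. destruct (Nat.eqb_spec k 0).
        - unfold v. rewrite sumR_const. simpl INR. field. lra.
        - destruct (Nat.leb_spec k 0); [lia|reflexivity]. }
    apply chain; auto. }
  assert (Cu0 : forall t, 0 <= Q n c u t).
  { intros t. apply V_nonneg; [|intros; apply Fc_bounds].
    intros k Hk. unfold draw_prob. destruct (Nat.eqb_spec k 0).
    - unfold u. rewrite sumR_const. right. field. lra.
    - unfold u. left. apply Rdiv_lt_0_compat; lra. }
  destruct (Q_geom n c p ltac:(lia) Hp Hs) as [r [Hr Hg]].
  assert (HK : 0 <= INR n) by apply pos_INR.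
  destruct (series_ok (Q n c p) (INR n) r Hr HK) as [[Lp HLp] Hp2].
  { intros t. split; auto. specialize (Cvp t); specialize (Cuv t); specialize (Cu0 t); lra. }
  destruct (series_ok (Q n c v) (INR n) r Hr HK) as [[Lv HLv] Hv2].
  { intros t. specialize (Hg t); specialize (Cvp t); specialize (Cuv t); specialize (Cu0 t); lra. }
  destruct (series_ok (Q n c u) (INR n) r Hr HK) as [[Lu HLu] Hu2].
  { intros t. specialize (Hg t); specialize (Cvp t); specialize (Cuv t); specialize (Cu0 t); lra. }
  exists Lp, Lv, Lu. repeat split.
  - apply expected_ok; auto; lia.
  - apply expected_ok; auto; lia.
  - apply expected_ok; auto; lia.
  - apply Rle_ge. apply (Rle_cv_lim (Un := sum_f_R0 (Q n c v)) (Vn := sum_f_R0 (Q n c p))); auto. intros N. apply sum_Rle. intros; auto.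
  - apply Rle_ge. apply (Rle_cv_lim (Un := sum_f_R0 (Q n c u)) (Vn := sum_f_R0 (Q n c v))); auto. intros N. apply sum_Rle. intros; auto.
Qed.
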